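(* Let $X$ be a finite, simple, connected $3$-valent plane graph such that the number of edges surrounding each face is divisible by $3$. Then $V(X)$ admits a coloring by two colors, black and white, such that: (C-i) every black vertex is adjacent to three white vertices; (C-ii) every white vertex is adjacent to exactly one black vertex (so its other two neighbours are white); (C-iii) for any pair of black vertices $x,y$ at graph distance $3$ from each other, there is a path from $x$ to $y$ of length $3$ which either turns left at both of its interior vertices or turns right at both of its interior vertices.
   Context: In a $3$-valent plane graph, a path $\dots,u,v,w,\dots$ arriving at $v$ along the edge $uv$ and leaving along the edge $vw\neq uv$ turns right (resp. left) at $v$ according as $vw$ is the edge following $uv$ in the clockwise (resp. counterclockwise) order of the three edges around $v$ determined by the plane embedding. *)

(* Defs.v *)
From mathcomp Require Import all_boot fingroup perm.
Set Implicit Arguments. Unset Strict Implicit. Unset Printing Implicit Defensive.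

(* A plane graph is encoded combinatorially by a rotation system (combinatorial
   map) of genus 0.  Darts D (half-edges); [tl d] is the vertex at which dart d
   starts; [alpha] is the fixed-point-free involution reversing a dart;
   [sigma] is the rotation: [sigma d] is the dart following d in the clockwise
   order around the vertex [tl d]. *)

Section Map.
Variables (V D : finType) (tl : D -> V) (alpha : D -> D) (sigma : {perm D}).

Definition face_perm (d : D) : D := sigma (alpha d).

Definition adj (x y : V) : bool := [exists d, (tl d == x) && (tl (alpha d) == y)].

Definition number_of_edges : nat := #|D| %/ 2.
Definition number_of_faces : nat := fcard face_perm D.

Definition cubic_plane_graph : Prop :=
      (forall d, alpha (alpha d) = d) /\ (forall d, alpha d != d) /\
      (forall d, tl (sigma d) = tl d) /\
      (forall d e, tl d = tl e -> fconnect sigma d e) /\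
      (forall x : V, #|[set d | tl d == x]| = 3) /\
      (forall d, tl (alpha d) != tl d) /\
      (forall d e, tl d = tl e -> tl (alpha d) = tl (alpha e) -> d = e) /\
      (forall x y : V, connect adj x y) /\
      (* plane: the embedding has genus 0 (Euler's formula) *)
      (#|V| + number_of_faces = number_of_edges + 2)%N.

Definition faces_div3 : Prop := forall d : D, 3 %| fingraph.order face_perm d.

Definition dist3 (x y : V) : Prop :=
  [/\ x <> y, ~~ adj x y, ~ (exists z, adj x z && adj z y) &
      exists z1 z2, [&& adj x z1, adj z1 z2 & adj z2 y]].

(* a path x = v0, v1, v2, v3 = y given by darts d1 (v0->v1), d2 (v1->v2),
   d3 (v2->v3) that turns right at v1 and v2: the leaving dart is the one
   following the arrival dart (alpha of the previous) clockwise. *)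
Definition right_right_path (x y : V) : Prop :=
  exists d1, tl d1 = x /\
    tl (alpha (sigma (alpha (sigma (alpha d1))))) = y.
Definition left_left_path (x y : V) : Prop :=
  exists d1, tl d1 = x /\
    tl (alpha ((sigma^-1)%g (alpha ((sigma^-1)%g (alpha d1))))) = y.

Definition coloring_ok (black : V -> bool) : Prop :=
  [/\ (forall x y, black x -> adj x y -> ~~ black y),
      (forall x, ~~ black x -> #|[set y | adj x y && black y]| = 1) &
      (forall x y, black x -> black y -> dist3 x y ->
                        right_right_path x y \/ left_left_path x y)].
End Map.

(* Main.v *)
Require Import Defs.
From mathcomp Require Import all_boot fingroup perm.
From mathcomp Require Import all_algebra zify ring.
Set Implicit Arguments. Unset Strict Implicit. Unset Printing Implicit Defensive.
Import GRing.Theory.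
Local Open Scope ring_scope.

Section Incidence.
Variables (K : fieldType) (X Y : finType) (f g : Y -> X).

Definition incmx : 'M[K]_(#|X|, #|Y|) :=
  \matrix_(i, j) (((enum_val i == f (enum_val j))%:R) - ((enum_val i == g (enum_val j))%:R)).

Lemma sum_delta (u : 'rV[K]_#|X|) (x : X) :
  \sum_(i < #|X|) u 0 i * ((enum_val i == x)%:R) = u 0 (enum_rank x).
Proof.
rewrite (bigD1 (enum_rank x)) //= enum_rankK eqxx mulr1 big1 ?addr0 //.
move=> i Hi; case: eqP => [Ex|]; last by rewrite mulr0.
by move: Hi; rewrite -Ex enum_valK eqxx.
Qed.

Lemma mul_incmx (u : 'rV[K]_#|X|) j :
  (u *m incmx) 0 j = u 0 (enum_rank (f (enum_val j))) - u 0 (enum_rank (g (enum_val j))).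
Proof.
rewrite !mxE -!sum_delta -sumrB; apply: eq_bigr => i _.
by rewrite mxE mulrBr.
Qed.

Lemma rank_incmx :
  (forall w : X -> K, (forall y, w (f y) = w (g y)) -> forall x x', w x = w x') ->
  (#|X| <= (\rank incmx).+1)%N.
Proof.
move=> Hc.
case: (pickP X) => [x0 _|X0]; last first.
  by rewrite {1}(eq_card0 X0).
have H1 : (kermx incmx <= (const_mx 1 : 'rV[K]_#|X|))%MS.
  apply/row_subP => i; apply/sub_rVP.
  set u := row i (kermx incmx).
  have Hu : u *m incmx = 0 by rewrite /u -row_mul mulmx_ker row0.
  clearbody u.
  have Hw := Hc (fun x => u 0 (enum_rank x)).
  exists (u 0 (enum_rank x0)); apply/rowP => j.
  rewrite !mxE mulr1 -{1}(enum_valK j).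
  by apply: Hw => y; apply/eqP; rewrite -subr_eq0 -(enum_rankK y) -mul_incmx Hu mxE.
have := mxrankS H1; have := rank_leq_row (const_mx 1 : 'rV[K]_#|X|).
rewrite mxrank_ker => h1 h2.
have := leq_trans h2 h1. lia.
Qed.
End Incidence.

Lemma connect_inv (T : finType) (R : Type) (e : rel T) (w : T -> R) :
  (forall x y, e x y -> w x = w y) -> forall x y, connect e x y -> w x = w y.
Proof.
move=> H x y /connectP [p]; elim: p x => [|z p IH] x /=; first by move=> _ ->.
by case/andP => exz pz ly; rewrite (H _ _ exz); exact: IH.
Qed.

Section Potential.
Variables (V D : finType) (tl : D -> V) (alpha : D -> D) (sigma : {perm D}).
Hypotheses (Ha2 : forall d, alpha (alpha d) = d) (Ha1 : forall d, alpha d != d)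
  (Hs : forall d, tl (sigma d) = tl d)
  (Hsc : forall d e, tl d = tl e -> fconnect sigma d e)
  (Hconn : forall x y : V, connect [rel x y | [exists d, (tl d == x) && (tl (alpha d) == y)]] x y)
  (Hex : forall x, exists d, tl d == x).

Let phi (d : D) : D := sigma (alpha d).

Lemma alpha_inj : injective alpha. Proof. exact: can_inj Ha2. Qed.
Lemma phi_inj : injective phi.
Proof. by move=> x y /perm_inj /alpha_inj. Qed.
Let phi_sym := fconnect_sym phi_inj.

Definition Er : {pred D} := [pred d | (enum_rank d < enum_rank (alpha d))%N].
Definition ET : finType := {x in Er}%type.
Definition Rt : {pred D} := [pred d | froot phi d == d].
Definition RT : finType := {x in Rt}%type.
Definition rt (d : D) : RT := Sub (froot phi d) (roots_root phi_sym d).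

Lemma Er_alpha d : Er (alpha d) = ~~ Er d.
Proof.
rewrite /Er /= Ha2.
have Hne : (enum_rank d : nat) != enum_rank (alpha d).
  by apply/negP => /eqP /val_inj /enum_rank_inj E; move: (Ha1 d); rewrite -E eqxx.
by rewrite ltnNge leq_eqVlt (negbTE Hne).
Qed.

Lemma sum_ET (K : fieldType) (F : D -> K) :
  \sum_(j < #|ET|) F (val (enum_val j)) = \sum_(d in Er) F d.
Proof.
rewrite [RHS]big_sub /=.
rewrite [RHS](reindex (@enum_val ET predT)) //; exact: onW_bij (enum_val_bij _).
Qed.

Lemma sum_Er (K : fieldType) (G : D -> K) :
  \sum_(d in Er) (G d + G (alpha d)) = \sum_d G d.
Proof.
rewrite big_split /= [RHS](bigID Er) /=; congr (_ + _).
rewrite (reindex alpha); last exact: onW_bij (inv_bij Ha2).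
by apply: eq_big => [d|d _]; rewrite ?Ha2 // -topredE /= Er_alpha.
Qed.

Lemma froot_phi d : froot phi (phi d) = froot phi d.
Proof. by apply/esym; apply: (fingraph.rootP phi_sym); exact: fconnect1. Qed.

Lemma face_tl (K : fieldType) (r : D) (x : V) :
  \sum_(d | froot phi d == r) (((x == tl (alpha d))%:R : K) - (x == tl d)%:R) = 0.
Proof.
rewrite sumrB; apply/eqP; rewrite subr_eq0; apply/eqP.
rewrite [RHS](reindex phi); last exact: onW_bij (injF_bij phi_inj).
by apply: eq_big => d; rewrite ?froot_phi // /phi Hs.
Qed.


Lemma rtE d : val (rt d) = froot phi d. Proof. by []. Qed.
Lemma rt_val (r : RT) : rt (val r) = r.
Proof. by apply: val_inj; rewrite rtE; apply/eqP; exact: (valP r). Qed.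

Lemma sum_Er_ET (K : fieldType) (G : D -> K) :
  \sum_(j < #|ET|) (G (val (enum_val j)) + G (alpha (val (enum_val j)))) = \sum_d G d.
Proof. by rewrite (sum_ET (fun d => G d + G (alpha d))) sum_Er. Qed.

Lemma adj_alpha (w : V -> Prop) : True. Proof. by []. Qed.

Lemma Er_or d : Er d \/ Er (alpha d).
Proof. by rewrite Er_alpha; case: (Er d); [left|right]. Qed.

Lemma vconst (R : Type) (w : V -> R) : (forall d, w (tl (alpha d)) = w (tl d)) -> forall x y, w x = w y.
Proof.
move=> H x y; apply: connect_inv (Hconn x y) => a b /existsP [d /andP [/eqP <- /eqP <-]].
by rewrite H.
Qed.

Lemma sigma_inv (R : Type) (Y : D -> R) : (forall d, Y (sigma d) = Y d) ->
  forall d e, tl d = tl e -> Y d = Y e.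
Proof.
move=> H d e /Hsc; apply: connect_inv => a b /eqP <-; by rewrite H.
Qed.


Lemma card_ET : #|D| = (#|ET| + #|ET|)%N.
Proof.
have E : #|ET| = #|Er| by rewrite card_sig.
rewrite E -(cardC Er); congr (_ + _)%N.
rewrite -(card_image alpha_inj Er); apply: eq_card => x.
rewrite !inE -[x]Ha2 mem_image; last exact: alpha_inj.
by rewrite !Ha2 (_ : (alpha x \in Er) = Er (alpha x)) // Er_alpha.
Qed.

Lemma card_RT : fcard phi D = #|RT|.
Proof.
by rewrite card_sig; apply: eq_card => x; rewrite !inE andbT.
Qed.


Lemma potential (Heul : (#|V| + fcard phi D = #|D| %/ 2 + 2)%N) (K : fieldType) (t : D -> K) :
  (forall d, t (alpha d) = - t d) ->
  (forall d, \sum_(e | fconnect phi d e) t e = 0) ->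
  exists p : V -> K, forall d, t d = p (tl (alpha d)) - p (tl d).
Proof.
move=> Hta Hfs.
pose fB1 := fun e : ET => tl (alpha (val e)). pose fB2 := fun e : ET => tl (val e).
pose B := incmx K fB1 fB2.
pose fC1 := fun e : ET => rt (val e). pose fC2 := fun e : ET => rt (alpha (val e)).
pose Ct := incmx K fC1 fC2.
have rB : (#|V| <= (\rank B).+1)%N.
  apply: rank_incmx => w Hw x y; apply: vconst => d.
  case: (Er_or d) => Hd.
  - exact: (Hw (Sub d Hd)).
  - by have := Hw (Sub (alpha d) Hd); rewrite /fB1 /fB2 /= Ha2 => ->.
have rC : (#|RT| <= (\rank Ct).+1)%N.
  apply: rank_incmx => w Hw r r'.
  pose Y d := w (rt d).
  have YA : forall d, Y (alpha d) = Y d.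
    move=> d; case: (Er_or d) => Hd; first exact/esym/(Hw (Sub d Hd)).
    by have := Hw (Sub (alpha d) Hd); rewrite /fC1 /fC2 /= Ha2.
  have YS : forall d, Y (sigma d) = Y d.
    move=> d; rewrite -[in RHS]YA /Y; congr w; apply: val_inj.
    have -> : sigma d = phi (alpha d) by rewrite /phi Ha2.
    by rewrite !rtE froot_phi.
  pose W v := Y (xchoose (Hex v)).
  have YW : forall d, Y d = W (tl d).
    move=> d; apply: (sigma_inv YS); exact/esym/eqP/(xchooseP (Hex (tl d))).
  have : W (tl (val r)) = W (tl (val r')) by apply: vconst => d; rewrite -!YW YA.
  by rewrite -!YW /Y !rt_val.
have cET := card_ET; have cRT := card_RT.
have BC : B *m Ct^T = 0.
  apply/matrixP => i j; rewrite !mxE.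
  set x := enum_val i; set r := enum_val j.
  pose Q d : K := ((x == tl (alpha d))%:R - (x == tl d)%:R) * (r == rt d)%:R.
  transitivity (\sum_d Q d).
    rewrite -sum_Er_ET; apply: eq_bigr => k _; rewrite !mxE /Q /fB1 /fB2 /fC1 /fC2 Ha2; ring.
  rewrite (bigID (fun d => rt d == r)) /= [X in _ + X]big1 ?addr0; last first.
    by move=> d /negbTE; rewrite /Q eq_sym => ->; rewrite mulr0.
  rewrite -[RHS](face_tl K (val r) x); apply: eq_big => d.
    by rewrite -(inj_eq val_inj).
  by move=> Hd; rewrite /Q eq_sym (eqP Hd) eqxx mulr1.
pose tr := \row_(j < #|ET|) t (val (enum_val j)).
have tC : tr *m Ct^T = 0.
  apply/rowP => j; rewrite !mxE. set r := enum_val j.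
  pose T d := t d * (r == rt d)%:R.
  transitivity (\sum_d T d).
    rewrite -sum_Er_ET; apply: eq_bigr => k _; rewrite !mxE /T /fC1 /fC2 Hta; ring.
  rewrite (bigID (fun d => rt d == r)) /= [X in _ + X]big1 ?addr0; last first.
    by move=> d /negbTE; rewrite /T eq_sym => ->; rewrite mulr0.
  rewrite -[RHS](Hfs (val r)); apply: eq_big => d.
    rewrite -(inj_eq val_inj) rtE -{1}(eqP (valP r)) (root_connect phi_sym).
    by rewrite phi_sym.
  by move=> Hd; rewrite /T eq_sym (eqP Hd) eqxx mulr1.
have HBk : (B <= kermx Ct^T)%MS by apply/sub_kermxP.
have Hk : (kermx Ct^T <= B)%MS.
  rewrite -(geq_leqif (mxrank_leqif_sup HBk)).
  rewrite mxrank_ker mxrank_tr.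
  move: Heul; rewrite cET cRT. lia.
have /submxP [u Hu] : (tr <= B)%MS.
  by apply: submx_trans Hk; apply/sub_kermxP.
exists (fun v => u 0 (enum_rank v)) => d.
have key : forall e : ET, t (val e) = u 0 (enum_rank (tl (alpha (val e)))) - u 0 (enum_rank (tl (val e))).
  move=> e; have := Hu; move/rowP => /(_ (enum_rank e)).
  by rewrite mul_incmx mxE enum_rankK.
case: (Er_or d) => Hd; first exact: (key (Sub d Hd)).
have := key (Sub (alpha d) Hd); rewrite /= Ha2 Hta => /eqP; rewrite eqr_oppLR opprB => /eqP.
by [].
Qed.

End Potential.

Lemma F2_cases (x : 'F_2) : x = 0 \/ x = 1.
Proof. case: x => [[|[|//]]] Hm; [left|right]; exact: val_inj. Qed.
Lemma F3_cases (x : 'F_3) : [\/ x = 0, x = 1 | x = 1 + 1].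
Proof. case: x => [[|[|[|//]]]] Hm; [constructor 1|constructor 2|constructor 3]; exact: val_inj. Qed.
Lemma F2_opp (x : 'F_2) : - x = x.
Proof. by case: (F2_cases x) => ->; apply/val_inj. Qed.
Lemma F3_3 : (3%:R : 'F_3) = 0. Proof. exact: val_inj. Qed.
Lemma F3_nat_mod m : ((m %% 3)%:R : 'F_3) = m%:R.
Proof. by rewrite {2}(divn_eq m 3) natrD natrM F3_3 mulr0 add0r. Qed.

Definition c1 (x : 'F_3) : 'F_2 := if x == 1 then 0 else 1.
Definition c2 (x : 'F_3) : 'F_2 := if x == 0 then 0 else 1.

Lemma sum_telescope (K : fieldType) (a : nat -> K) n :
  \sum_(0 <= j < n) (a j - a j.+1) = a 0%N - a n.
Proof.
elim: n => [|n IH]; first by rewrite big_geq // subrr.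
by rewrite big_nat_recr //= IH addrA subrK.
Qed.

Lemma c1_tri a : c1 a + c1 (a + 1) + c1 (a + (1 + 1)) = 0.
Proof. by case: (F3_cases a) => ->; apply/val_inj. Qed.
Lemma c2_tri a : c2 a + c2 (a + 1) + c2 (a + (1 + 1)) = 0.
Proof. by case: (F3_cases a) => ->; apply/val_inj. Qed.

Lemma sum3 (c : 'F_3 -> 'F_2) (Hc : forall a, c a + c (a + 1) + c (a + (1 + 1)) = 0) a q :
  \sum_(0 <= j < 3 * q) c (a + j%:R) = 0.
Proof.
elim: q => [|q IH]; first by rewrite muln0 big_geq.
rewrite mulnS addnC !addnS addn0 !big_nat_recr //= IH add0r.
rewrite -!natr1 (_ : (3 * q)%:R = 0 :> 'F_3); last first.
  by rewrite natrM F3_3 mul0r.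
rewrite !addr0 !add0r !addrA -(addrA a 1 1).
by have := Hc a.
Qed.

Lemma c_nz p : ~~ ((c1 p == 0) && (c2 p == 0)).
Proof. by case: (F3_cases p) => ->. Qed.
Lemma c_cover a1 a2 p : ~~ ((a1 == 0) && (a2 == 0)) ->
  [|| (a1 + c1 p == 0) && (a2 + c2 p == 0),
      (a1 + c1 (p + 1) == 0) && (a2 + c2 (p + 1) == 0) |
      (a1 + c1 (p + 1 + 1) == 0) && (a2 + c2 (p + 1 + 1) == 0)].
Proof. by case: (F2_cases a1) => ->; case: (F2_cases a2) => ->; case: (F3_cases p) => ->. Qed.
Lemma c_inj p q : c1 p = c1 q -> c2 p = c2 q -> p = q.
Proof.
move=> H1 H2; apply/eqP; move/eqP: H1; move/eqP: H2.
by case: (F3_cases p) => ->; case: (F3_cases q) => ->.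
Qed.
Lemma F3_ne1 (p : 'F_3) : p + 1 != p. Proof. by case: (F3_cases p) => ->. Qed.
Lemma F3_ne2 (p : 'F_3) : p + 1 + 1 != p. Proof. by case: (F3_cases p) => ->. Qed.
Lemma c_mix1 p : ~~ ((c1 p + c1 (p+1) + c1 (p+1+1+1) == 0) && (c2 p + c2 (p+1) + c2 (p+1+1+1) == 0)).
Proof. by case: (F3_cases p) => ->. Qed.
Lemma c_mix2 p : ~~ ((c1 p + c1 (p+1+1) + c1 (p+1+1+1) == 0) && (c2 p + c2 (p+1+1) + c2 (p+1+1+1) == 0)).
Proof. by case: (F3_cases p) => ->. Qed.

Section Coloring.
Variables (V D : finType) (tl : D -> V) (alpha : D -> D) (sigma : {perm D}).
Hypotheses (Ha2 : forall d, alpha (alpha d) = d) (Ha1 : forall d, alpha d != d)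
  (Hs : forall d, tl (sigma d) = tl d)
  (Hsc : forall d e, tl d = tl e -> fconnect sigma d e)
  (H3 : forall x : V, #|[set d | tl d == x]| = 3)
  (Hconn : forall x y : V, connect [rel x y | [exists d, (tl d == x) && (tl (alpha d) == y)]] x y)
  (Heul : (#|V| + fcard (fun d => sigma (alpha d)) D = #|D| %/ 2 + 2)%N)
  (Hdiv : forall d, (3 %| fingraph.order (fun d => sigma (alpha d)) d)%N).

Let phi (d : D) : D := sigma (alpha d).

Lemma Hex x : exists d, tl d == x.
Proof.
have /card_gt0P [d] : (0 < #|[set d | tl d == x]|)%N by rewrite H3.
by rewrite inE; exists d.
Qed.

Lemma sc_tl d e : fconnect sigma d e -> tl d = tl e.
Proof. by apply: connect_inv => a b /eqP <-; rewrite Hs. Qed.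

Lemma order_sigma d : fingraph.order sigma d = 3.
Proof.
rewrite /fingraph.order -(H3 (tl d)); apply: eq_card => e.
rewrite inE -topredE /=; apply/idP/eqP => [/sc_tl -> //|E]; exact: Hsc.
Qed.

Lemma sigma3 d : sigma (sigma (sigma d)) = d.
Proof. by have := iter_order (@perm_inj _ sigma) d; rewrite order_sigma. Qed.

Lemma sigmaV d : (sigma^-1)%g d = sigma (sigma d).
Proof. by apply: (@perm_inj _ sigma); rewrite permKV sigma3. Qed.

Lemma darts3 d e : tl d = tl e -> [\/ e = d, e = sigma d | e = sigma (sigma d)].
Proof.
move=> /Hsc Hde; have := findex_max Hde; rewrite order_sigma.
move: (iter_findex Hde); case: (findex sigma d e) => [|[|[|n]]] //= <- _;
  first [by constructor 1 | by constructor 2 | by constructor 3].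
Qed.

Definition bd (v : V) : D := xchoose (Hex v).
Lemma bd_tl v : tl (bd v) = v. Proof. exact/eqP/(xchooseP (Hex v)). Qed.

Definition kk (d : D) : nat := findex sigma (bd (tl d)) d.

Lemma kk_sigma d : ((kk (sigma d))%:R : 'F_3) = (kk d)%:R + 1.
Proof.
rewrite /kk Hs.
have Hc : fconnect sigma (bd (tl d)) d by apply: Hsc; rewrite bd_tl.
have Hlt := findex_max Hc; rewrite order_sigma in Hlt.
have Hi := iter_findex Hc.
set c := bd (tl d) in Hc Hlt Hi *; set i := findex sigma c d in Hlt Hi *.
have -> : sigma d = iter i.+1 sigma c by rewrite /= Hi.
rewrite natr1 -F3_nat_mod.
case: i Hlt {Hi} => [|[|[|]]] // _.
- by rewrite findex_iter // order_sigma.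
- by rewrite findex_iter // order_sigma.
- by rewrite /= sigma3 findex0 mod0n F3_3.
Qed.

Lemma orbit_sum (K : fieldType) (G : D -> K) d :
  \sum_(e | fconnect phi d e) G e = \sum_(0 <= j < fingraph.order phi d) G (iter j phi d).
Proof.
rewrite (eq_bigl (mem (orbit phi d))) => [|e]; last by rewrite fconnect_orbit.
rewrite -big_uniq; last exact: orbit_uniq.
rewrite /orbit; elim: (fingraph.order phi d) => [|n IH]; first by rewrite big_nil big_geq.
by rewrite trajectSr big_rcons IH big_nat_recr.
Qed.


Lemma phi_inj2 : injective phi.
Proof. by move=> x y /perm_inj /(can_inj Ha2). Qed.

Definition t3 d : 'F_3 := (kk d)%:R - (kk (alpha d))%:R.

Lemma nat3 n : (3 %| n)%N -> (n%:R : 'F_3) = 0.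
Proof. by move/divnK <-; rewrite natrM F3_3 mulr0. Qed.

Lemma t3_face d : \sum_(e | fconnect phi d e) t3 e = 0.
Proof.
rewrite orbit_sum.
pose a j : 'F_3 := (kk (iter j phi d))%:R.
have E : forall j, t3 (iter j phi d) = a j - a j.+1 + 1.
  move=> j; rewrite /a /t3 /= /phi kk_sigma; ring.
rewrite (eq_bigr _ (fun j _ => E j)) big_split /= sum_telescope.
rewrite sumr_const_nat subn0 /a iter_order; last exact: phi_inj2.
by rewrite /= subrr add0r -[1 *+ _]mulr_natr mul1r nat3 //; apply: Hdiv.
Qed.

Lemma t3_anti d : t3 (alpha d) = - t3 d.
Proof. by rewrite /t3 Ha2 opprB. Qed.

Lemma exP3 : exists P : D -> 'F_3, (forall d, P (alpha d) = P d) /\ (forall d, P (sigma d) = P d + 1).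
Proof.
have [p3 Hp3] := potential Ha2 Ha1 Hs Hsc Hconn Hex Heul t3_anti t3_face.
exists (fun d => p3 (tl d) + (kk d)%:R); split => d.
  have -> : p3 (tl (alpha d)) = (kk d)%:R - (kk (alpha d))%:R + p3 (tl d).
    by have := Hp3 d; rewrite /t3 => ->; rewrite subrK.
  ring.
by rewrite Hs kk_sigma addrA.
Qed.


Lemma exPhi (P : D -> 'F_3) (HPa : forall d, P (alpha d) = P d)
  (HPs : forall d, P (sigma d) = P d + 1) (c : 'F_3 -> 'F_2)
  (Hc : forall a, c a + c (a + 1) + c (a + (1 + 1)) = 0) :
  exists f : V -> 'F_2, forall d, f (tl (alpha d)) = f (tl d) + c (P d).
Proof.
have anti : forall d, c (P (alpha d)) = - c (P d) by move=> d; rewrite HPa F2_opp.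
have face : forall d, \sum_(e | fconnect phi d e) c (P e) = 0.
  move=> d; rewrite orbit_sum.
  have E : forall j, P (iter j phi d) = P d + j%:R.
    elim => [|j IH]; first by rewrite addr0.
    by rewrite iterS /phi HPs HPa IH -natr1 addrA.
  rewrite (eq_bigr _ (fun j _ => congr1 c (E j))).
  have /divnK <- := Hdiv d; rewrite mulnC; exact: sum3.
have [f Hf] := potential Ha2 Ha1 Hs Hsc Hconn Hex Heul anti face.
by exists f => d; rewrite Hf addrC subrK.
Qed.


Lemma main_col : exists black : V -> bool, coloring_ok tl alpha sigma black.
Proof.
have [P [HPa HPs]] := exP3.
have [f1 Hf1] := exPhi HPa HPs c1_tri.
have [f2 Hf2] := exPhi HPa HPs c2_tri.
pose black v := (f1 v == 0) && (f2 v == 0).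
have blackA : forall d, black (tl (alpha d)) =
    (f1 (tl d) + c1 (P d) == 0) && (f2 (tl d) + c2 (P d) == 0).
  by move=> d; rewrite /black Hf1 Hf2.
have HPss : forall d, P (sigma (sigma d)) = P d + 1 + 1 by move=> d; rewrite !HPs.
exists black; split.
- move=> x y /andP [/eqP bx1 /eqP bx2] /existsP [d /andP [/eqP dx /eqP dy]].
  by rewrite -dy blackA dx bx1 bx2 !add0r c_nz.
- move=> x bx.
  have Hd := bd_tl x; set d := bd x in Hd.
  have [j [Hj Bj]] : exists j, tl j = x /\ black (tl (alpha j)).
    have := c_cover (P d) bx; case/or3P => H.
    + by exists d; rewrite blackA Hd.
    + by exists (sigma d); rewrite blackA Hs Hd HPs.
    + by exists (sigma (sigma d)); rewrite blackA !Hs Hd HPss.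
  have Uj : forall e, tl e = x -> black (tl (alpha e)) -> e = j.
    move=> e ex; rewrite blackA ex => /andP [/eqP E1 /eqP E2].
    move: Bj; rewrite blackA Hj => /andP [/eqP F1 /eqP F2].
    have EP : P e = P j.
      apply: c_inj.
        by apply: (@addrI _ (f1 x)); rewrite E1 F1.
      by apply: (@addrI _ (f2 x)); rewrite E2 F2.
    have : tl j = tl e by rewrite ex Hj.
    case/darts3 => // E; move: EP; rewrite E ?HPs ?HPss => /eqP.
      by rewrite (negbTE (F3_ne1 _)).
    by rewrite (negbTE (F3_ne2 _)).
  have -> : [set y | adj tl alpha x y && black y] = [set tl (alpha j)].
    apply/setP => y; rewrite !inE; apply/andP/eqP.
    + case=> /existsP [e /andP [/eqP ex /eqP ey]] By.
      by rewrite -ey (Uj e ex) // ey.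
    + move=> ->; split => //; apply/existsP; exists j; by rewrite Hj !eqxx.
  exact: cards1.
- move=> x y /andP [/eqP bx1 /eqP bx2] /andP [/eqP by1 /eqP by2] [_ nadj _ [z1 [z2]]].
  case/and3P => /existsP [d1 /andP [/eqP d1x /eqP d1z]] /existsP [e2 /andP [/eqP e2z /eqP e2z2]]
    /existsP [e3 /andP [/eqP e3z /eqP e3y]].
  have F1 : f1 y = c1 (P d1) + c1 (P e2) + c1 (P e3).
    by rewrite -e3y Hf1 e3z -e2z2 Hf1 e2z -d1z Hf1 d1x bx1 add0r.
  have F2 : f2 y = c2 (P d1) + c2 (P e2) + c2 (P e3).
    by rewrite -e3y Hf2 e3z -e2z2 Hf2 e2z -d1z Hf2 d1x bx2 add0r.
  have : tl (alpha d1) = tl e2 by rewrite d1z e2z.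
  case/darts3 => E2; subst e2.
  + exfalso; move: nadj; rewrite -e3y; apply/negP/negPn; apply/existsP; exists e3.
    by rewrite e3z -e2z2 Ha2 d1x !eqxx.
  + have : tl (alpha (sigma (alpha d1))) = tl e3 by rewrite e2z2 e3z.
    case/darts3 => E3; subst e3.
    * exfalso; move: nadj; rewrite -e3y Ha2 Hs d1z; apply/negP/negPn; apply/existsP.
      by exists d1; rewrite d1x d1z !eqxx.
    * by left; exists d1; split.
    * rewrite !(HPs, HPa) in F1 F2.
      by move: (c_mix1 (P d1)); rewrite -F1 -F2 by1 by2 eqxx.
  + have : tl (alpha (sigma (sigma (alpha d1)))) = tl e3 by rewrite e2z2 e3z.
    case/darts3 => E3; subst e3.
    * exfalso; move: nadj; rewrite -e3y Ha2 !Hs d1z; apply/negP/negPn; apply/existsP.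
      by exists d1; rewrite d1x d1z !eqxx.
    * rewrite !(HPs, HPa) in F1 F2.
      by move: (c_mix2 (P d1)); rewrite -F1 -F2 by1 by2 eqxx.
    * by right; exists d1; split; rewrite // !sigmaV.
Qed.

End Coloring.

Theorem proposition2p10 (V D : finType) (tl : D -> V) (alpha : D -> D)
    (sigma : {perm D}) :
  cubic_plane_graph tl alpha sigma ->
  faces_div3 alpha sigma ->
  exists black : V -> bool, coloring_ok tl alpha sigma black.
Proof.
move=> [Ha2 [Ha1 [Hs [Hsc [H3 [_ [_ [Hconn Heul]]]]]]]] Hdiv.
exact: (main_col Ha2 Ha1 Hs Hsc H3 Hconn Heul Hdiv).
Qed.
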